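(* Let $X$ be a $T_1$-space and let $\mathcal{B}$ be a base of $X$ which is regular at non-isolated points. Then the family $\mathcal{B}^{m}=\{P\in\mathcal{B}: \text{if } P\subset Q\in\mathcal{B} \text{ then } Q=P\}$ of maximal members of $\mathcal{B}$ is locally finite at non-isolated points and covers $X\setminus I(X)$.
   Context: $I(X)$ denotes the set of isolated points of $X$. A base $\mathcal{B}$ of $X$ is regular at a point $x$ if for every neighborhood $U$ of $x$ there is an open set $V$ with $x\in V\subset U$ such that $\{B\in\mathcal{B}: B\cap V\neq\emptyset \text{ and } B\not\subset U\}$ is finite. $\mathcal{B}$ is a regular base at non-isolated points if it is regular at every $x\in X\setminus I(X)$. A family $\mathcal{F}$ of subsets of $X$ is locally finite at non-isolated points if every $x\in X\setminus I(X)$ has a neighborhood meeting only finitely many members of $\mathcal{F}$. *)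

(* Defs.v *)
From Stdlib Require Import List.
Import ListNotations.

Set Implicit Arguments.

Definition set (X : Type) := X -> Prop.
Definition subset {X : Type} (A B : set X) : Prop := forall x, A x -> B x.
Definition set_eq {X : Type} (A B : set X) : Prop := forall x, A x <-> B x.
Definition meets {X : Type} (A B : set X) : Prop := exists x, A x /\ B x.

Record topology (X : Type) : Type := {
  is_open : set X -> Prop;
  open_full : is_open (fun _ => True);
  open_inter : forall U V, is_open U -> is_open V -> is_open (fun x => U x /\ V x);
  open_union : forall (F : set X -> Prop),
      (forall U, F U -> is_open U) -> is_open (fun x => exists U, F U /\ U x)
}.

Arguments is_open {X} t U.

Definition T1 {X : Type} (t : topology X) : Prop :=
  forall x y : X, x <> y -> exists U, is_open t U /\ U x /\ ~ U y.

Definition nbhd {X : Type} (t : topology X) (x : X) (N : set X) : Prop :=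
  exists U, is_open t U /\ U x /\ subset U N.

Definition isolated {X : Type} (t : topology X) (x : X) : Prop :=
  is_open t (fun y => y = x).

Definition is_base {X : Type} (t : topology X) (B : set X -> Prop) : Prop :=
  (forall P, B P -> is_open t P) /\
  (forall U x, is_open t U -> U x -> exists P, B P /\ P x /\ subset P U).

Definition finite_family {X : Type} (F : set X -> Prop) : Prop :=
  exists L : list (set X), forall P, F P -> exists Q, In Q L /\ set_eq P Q.

Definition regular_at {X : Type} (t : topology X) (B : set X -> Prop) (x : X) : Prop :=
  forall U, nbhd t x U ->
    exists V, is_open t V /\ V x /\ subset V U /\
      finite_family (fun P => B P /\ meets P V /\ ~ subset P U).

Definition regular_at_nonisolated {X : Type} (t : topology X) (B : set X -> Prop) : Prop :=
  forall x, ~ isolated t x -> regular_at t B x.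

Definition locally_finite_at_nonisolated {X : Type} (t : topology X)
    (F : set X -> Prop) : Prop :=
  forall x, ~ isolated t x ->
    exists N, nbhd t x N /\ finite_family (fun P => F P /\ meets P N).

Definition maximal_members {X : Type} (B : set X -> Prop) : set X -> Prop :=
  fun P => B P /\ forall Q, B Q -> subset P Q -> set_eq Q P.

(* Main.v *)
Require Import Defs.
From Stdlib Require Import List.
From Stdlib Require Import Classical Lia FunctionalExtensionality PropExtensionality.

Lemma maxlemma {X : Type} (B : set X -> Prop) : forall n (L : list (set X)),
  length L <= n -> forall Q, B Q ->
  (forall Q', B Q' -> subset Q Q' -> exists R, In R L /\ set_eq Q' R) ->
  exists P, maximal_members B P /\ subset Q P.
Proof.
  induction n as [|n IH]; intros L HL Q HQ Hrep.
  - destruct L; [|simpl in HL; lia].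
    destruct (Hrep Q HQ (fun x h => h)) as [R [[] _]].
  - destruct (classic (forall Q', B Q' -> subset Q Q' -> set_eq Q' Q)) as [Hm|Hm].
    + exists Q. split; [split; assumption| intros x h; exact h].
    + apply not_all_ex_not in Hm as [Q' Hm].
      apply imply_to_and in Hm as [HBQ' Hm].
      apply imply_to_and in Hm as [HQQ' Hne].
      destruct (Hrep Q HQ (fun x h => h)) as [R0 [HR0 HQR0]].
      apply in_split in HR0 as [L1 [L2 ->]].
      destruct (IH (L1 ++ L2)) with (Q := Q') as [P [HP HQ'P]]; auto.
      * rewrite app_length in *. simpl in HL. lia.
      * intros Q'' HB'' HQ'Q''.
        destruct (Hrep Q'' HB'' (fun x h => HQ'Q'' x (HQQ' x h))) as [R [HR HQ''R]].
        apply in_app_or in HR as [HR|[HR|HR]].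
        -- exists R; split; auto using in_or_app.
        -- subst R. exfalso; apply Hne. intros x; split; intro h.
           ++ apply HQR0. apply HQ''R. apply HQ'Q''. exact h.
           ++ apply HQQ'; exact h.
        -- exists R; split; auto using in_or_app.
      * exists P; split; auto. intros x h; apply HQ'P, HQQ', h.
Qed.

Theorem mainTheorem1 (X : Type) (t : topology X) (B : set X -> Prop)
  (hT1 : T1 t) (hB : is_base t B) (hreg : regular_at_nonisolated t B) :
  locally_finite_at_nonisolated t (maximal_members B) /\
  (forall x, ~ isolated t x -> exists P, maximal_members B P /\ P x).
Proof.
  destruct hB as [hBo hBb].
  split.
  - intros x hx.
    destruct (hBb (fun _ => True) x (open_full t) I) as [P0 [HB0 [HP0x _]]].
    destruct (hreg x hx P0) as [V [HVo [HVx [HVP0 [L HL]]]]].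
    { exists P0; split; [auto|split; [auto|intros z h; exact h]]. }
    exists V. split.
    + exists V; split; [auto|split; [auto|intros z h; exact h]].
    + exists (P0 :: L). intros M [[HBM HMmax] HMV].
      destruct (classic (subset M P0)) as [Hs|Hs].
      * exists P0; split; [left; reflexivity|].
        intro z. destruct (HMmax P0 HB0 Hs z). split; auto.
      * destruct (HL M (conj HBM (conj HMV Hs))) as [Q [HQ HMQ]].
        exists Q; split; [right; auto|auto].
  - intros x hx.
    destruct (hBb (fun _ => True) x (open_full t) I) as [P0 [HB0 [HP0x _]]].
    assert (Hy : exists y, P0 y /\ y <> x).
    { apply NNPP; intro Hn. apply hx. unfold isolated.
      assert (E : P0 = (fun y => y = x)).
      { apply functional_extensionality_dep; intro z.
        apply propositional_extensionality; split; intro h.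
        - apply NNPP; intro hz. apply Hn; exists z; split; auto.
        - subst; auto. }
      rewrite <- E. apply hBo; auto. }
    destruct Hy as [y [HP0y Hyx]].
    set (U := fun z => exists W, (is_open t W /\ ~ W y) /\ W z).
    assert (HUo : is_open t U).
    { apply open_union. intros W [h _]; exact h. }
    assert (HUx : U x).
    { destruct (hT1 x y (fun e => Hyx (eq_sym e))) as [W [HW [HWx HWy]]].
      exists W; auto. }
    assert (HUy : ~ U y).
    { intros [W [[_ h1] h2]]; auto. }
    destruct (hreg x hx U) as [V [HVo [HVx [HVU [L HL]]]]].
    { exists U; split; [auto|split; [auto|intros z h; exact h]]. }
    destruct (maxlemma B (length L) L (le_n _) P0 HB0) as [P [HP HP0P]].
    + intros Q' HBQ' HP0Q'. apply HL. split; [auto|split].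
      * exists x; split; auto.
      * intro hs. apply HUy, hs, HP0Q', HP0y.
    + exists P; split; auto.
Qed.
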